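(* Let $B$ be a supersoluble brace. Then $(B,+)$ is nilpotent if and only if there is $n\in\mathbb{N}$ such that $B=\operatorname{Soc}_n(B)$.
   Context: A brace (skew left brace) is a set $B$ with two binary operations $+$ and $\cdot$ such that $(B,+)$ and $(B,\cdot)$ are groups and $a(b+c)=ab-a+ac$ for all $a,b,c\in B$. $\lambda_a(b)=-a+ab$ defines a homomorphism $\lambda\colon(B,\cdot)\to\operatorname{Aut}(B,+)$. An ideal is a subset that is a subgroup of both groups, normal in both, and invariant under all $\lambda_b$; quotients by ideals are braces. $\operatorname{Soc}(B)=\operatorname{Ker}\lambda\cap Z(B,+)$ is an ideal. Put $\operatorname{Soc}_0(B)=\{0\}$ and define $\operatorname{Soc}_{k+1}(B)$ by $\operatorname{Soc}_{k+1}(B)/\operatorname{Soc}_k(B)=\operatorname{Soc}(B/\operatorname{Soc}_k(B))$. $B$ is supersoluble if there is a finite chain of ideals $\{0\}=I_0\le\dots\le I_n=B$ such that for each $i$, either $(I_{i+1}/I_i,+)$ is infinite cyclic and $I_{i+1}/I_i\le\operatorname{Soc}(B/I_i)$, or $I_{i+1}/I_i$ has prime order. *)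

(* Defs.v *)
From mathcomp Require Import all_boot.
Set Implicit Arguments. Unset Strict Implicit. Unset Printing Implicit Defensive.

Record brace := Brace {
  car :> Type;
  badd : car -> car -> car;
  bzero : car;
  bopp : car -> car;
  bmul : car -> car -> car;
  bone : car;
  binv : car -> car;
  baddA : forall a b c, badd a (badd b c) = badd (badd a b) c;
  badd0l : forall a, badd bzero a = a;
  badd0r : forall a, badd a bzero = a;
  baddNl : forall a, badd (bopp a) a = bzero;
  baddNr : forall a, badd a (bopp a) = bzero;
  bmulA : forall a b c, bmul a (bmul b c) = bmul (bmul a b) c;
  bmul1l : forall a, bmul bone a = a;
  bmul1r : forall a, bmul a bone = a;
  bmulVl : forall a, bmul (binv a) a = bone;
  bmulVr : forall a, bmul a (binv a) = bone;
  bbrace : forall a b c,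
    bmul a (badd b c) = badd (badd (bmul a b) (bopp a)) (bmul a c)
}.

Arguments badd {b0}. Arguments bzero {b0}. Arguments bopp {b0}.
Arguments bmul {b0}. Arguments bone {b0}. Arguments binv {b0}.

Section BraceDefs.
Variable B : brace.
Local Notation "a + b" := (badd a b).
Local Notation "- a" := (bopp a).
Local Notation "a * b" := (bmul a b).

Definition blambda (a b : B) : B := - a + a * b.

Definition acomm (a b : B) : B := - (b + a) + (a + b).

Fixpoint nmul (n : nat) (g : B) : B :=
  match n with O => bzero | S k => g + nmul k g end.

(* congruence modulo a normal subgroup I of (B,+): x + I = y + I *)
Definition congr (I : B -> Prop) (x y : B) : Prop := I (- y + x).

Definition is_ideal (I : B -> Prop) : Prop :=
  I bzero /\
  (forall x y, I x -> I y -> I (x + y)) /\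
  (forall x, I x -> I (- x)) /\
  (forall x y, I x -> I y -> I (x * y)) /\
  (forall x, I x -> I (binv x)) /\
  (forall x b, I x -> I (b + x + - b)) /\
  (forall x b, I x -> I (b * x * binv b)) /\
  (forall x b, I x -> I (blambda b x)).

(* x + I belongs to Soc(B/I) = Ker lambda ∩ Z(B/I,+), written out on
   representatives: lambda_{[a]}([b]) = [b] and [a]+[b] = [b]+[a]. *)
Definition in_soc_mod (I : B -> Prop) (a : B) : Prop :=
  forall b, congr I (blambda a b) b /\ I (acomm a b).

(* Soc_0 = 0, Soc_{k+1}/Soc_k = Soc(B/Soc_k) *)
Fixpoint soc_n (k : nat) : B -> Prop :=
  match k with
  | O => fun x => x = bzero
  | S k' => fun a => in_soc_mod (soc_n k') a
  end.

Fixpoint zeta_n (k : nat) : B -> Prop :=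
  match k with
  | O => fun x => x = bzero
  | S k' => fun a => forall b, zeta_n k' (acomm a b)
  end.

Definition add_nilpotent : Prop := exists n, forall x : B, zeta_n n x.

Definition factor_inf_cyclic (I J : B -> Prop) : Prop :=
  (exists g, J g /\ forall x, J x -> exists n,
       congr I x (nmul n g) \/ congr I x (- nmul n g)) /\
  ~ (exists (k : nat) (f : nat -> B), forall x, J x ->
        exists2 i, i < k & congr I x (f i)).

Definition factor_prime_order (I J : B -> Prop) : Prop :=
  exists p, prime p /\ exists f : nat -> B,
    [/\ (forall i, i < p -> J (f i)),
        (forall i j, i < p -> j < p -> congr I (f i) (f j) -> i = j)
      & (forall x, J x -> exists2 i, i < p & congr I x (f i))].

Definition supersoluble : Prop :=
  exists (n : nat) (I : nat -> B -> Prop),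
    [/\ (forall x, I 0 x <-> x = bzero),
        (forall x, I n x),
        (forall i, i <= n -> is_ideal (I i)),
        (forall i x, i < n -> I i x -> I i.+1 x)
      & (forall i, i < n ->
           (factor_inf_cyclic (I i) (I i.+1) /\
            (forall x, I i.+1 x -> in_soc_mod (I i) x))
           \/ factor_prime_order (I i) (I i.+1))].

End BraceDefs.

(* Main.v *)
From HB Require Import structures.
Require Import Defs.
From mathcomp Require Import all_boot fingroup.
From Stdlib Require Import Setoid Morphisms Classical ClassicalEpsilon.
Set Warnings "-redundant-canonical-projection -notation-overridden".
Set Implicit Arguments. Unset Strict Implicit. Unset Printing Implicit Defensive.

Declare Scope br_scope.
Delimit Scope br_scope with br.
Local Infix "⊕" := badd (at level 50, left associativity).
Local Notation "⊖ a" := (bopp a) (at level 35, right associativity).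
Local Infix "⊙" := bmul (at level 40, left associativity).

Section Basics.
Variable B : brace.
Implicit Types a b c x y z : B.

Lemma addKl a b : ⊖ a ⊕ (a ⊕ b) = b.
Proof. by rewrite baddA baddNl badd0l. Qed.
Lemma addNKl a b : a ⊕ (⊖ a ⊕ b) = b.
Proof. by rewrite baddA baddNr badd0l. Qed.
Lemma addKr a b : b ⊕ a ⊕ ⊖ a = b.
Proof. by rewrite -baddA baddNr badd0r. Qed.
Lemma addNKr a b : b ⊕ ⊖ a ⊕ a = b.
Proof. by rewrite -baddA baddNl badd0r. Qed.
Lemma addIl a b c : a ⊕ b = a ⊕ c -> b = c.
Proof. by move=> h; rewrite -(addKl a b) h addKl. Qed.
Lemma addIr a b c : b ⊕ a = c ⊕ a -> b = c.
Proof. by move=> h; rewrite -(addKr a b) h addKr. Qed.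
Lemma oppK a : ⊖ ⊖ a = a.
Proof. by apply: (@addIl (⊖ a)); rewrite baddNr baddNl. Qed.
Lemma opp0 : ⊖ (bzero : B) = bzero.
Proof. by rewrite -[⊖ _]badd0l baddNr. Qed.
Lemma oppD a b : ⊖ (a ⊕ b) = ⊖ b ⊕ ⊖ a.
Proof. by apply: (@addIl (a ⊕ b)); rewrite baddNr -baddA addNKl baddNr. Qed.

Lemma mulIl a b c : a ⊙ b = a ⊙ c -> b = c.
Proof. by move=> h; rewrite -(bmul1l b) -(bmulVl a) -bmulA h bmulA bmulVl bmul1l. Qed.
Lemma invK a : binv (binv a) = a.
Proof. by apply: (@mulIl (binv a)); rewrite bmulVl bmulVr. Qed.

Lemma mul0r a : a ⊙ bzero = a.
Proof.
have := bbrace a bzero bzero; rewrite badd0l => h.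
have h2 : bzero = a ⊙ bzero ⊕ ⊖ a.
  by apply: (@addIr (a ⊙ bzero)); rewrite badd0l -h.
by apply: (@addIr (⊖ a)); rewrite -h2 baddNr.
Qed.
Lemma one0 : (bone : B) = bzero.
Proof. by rewrite -(bmul1l bzero) mul0r. Qed.

Lemma mul_lam a b : a ⊙ b = a ⊕ blambda a b.
Proof. by rewrite /blambda addNKl. Qed.
Lemma lamD a b c : blambda a (b ⊕ c) = blambda a b ⊕ blambda a c.
Proof. by rewrite /blambda bbrace !baddA. Qed.
Lemma lam0 a : blambda a bzero = bzero.
Proof. by rewrite /blambda mul0r baddNl. Qed.
Lemma lamN a b : blambda a (⊖ b) = ⊖ blambda a b.
Proof.
apply: (@addIl (blambda a b)); rewrite baddNr -lamD baddNr; exact: lam0.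
Qed.
Lemma lamM a b c : blambda (a ⊙ b) c = blambda a (blambda b c).
Proof.
rewrite [blambda b c]/blambda lamD lamN /blambda oppD !bmulA oppK.
by rewrite !baddA -(baddA _ a) baddNr badd0r.
Qed.
End Basics.
Record nsg (B : brace) := NSG {
  nsP :> B -> Prop;
  ns0 : nsP bzero;
  nsD : forall x y, nsP x -> nsP y -> nsP (x ⊕ y);
  nsN : forall x, nsP x -> nsP (⊖ x);
  nsJ : forall x b, nsP x -> nsP (b ⊕ x ⊕ ⊖ b) }.

Section NSG.
Variables (B : brace) (N : nsg B).
Implicit Types a b c x y z : B.

Lemma cg_refl x : congr N x x.
Proof. by rewrite /congr baddNl; exact: ns0. Qed.
Lemma cg_sym x y : congr N x y -> congr N y x.
Proof. by rewrite /congr => h; have := nsN h; rewrite oppD oppK. Qed.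
Lemma cg_trans x y z : congr N x y -> congr N y z -> congr N x z.
Proof.
rewrite /congr => h1 h2; have := nsD h2 h1.
by rewrite -baddA addNKl.
Qed.
Lemma nsJ' x b : N x -> N (⊖ b ⊕ x ⊕ b).
Proof. by move=> h; have := nsJ (⊖ b) h; rewrite oppK. Qed.
Lemma cg_add x x' y y' : congr N x x' -> congr N y y' -> congr N (x ⊕ y) (x' ⊕ y').
Proof.
rewrite /congr => h1 h2.
have := nsD h2 (nsJ' y h1).
by rewrite oppD -!baddA addNKl.
Qed.
Lemma cg_opp x x' : congr N x x' -> congr N (⊖ x) (⊖ x').
Proof.
rewrite /congr oppK => h.
by have := nsN (nsJ x' h); rewrite addNKl oppD oppK.
Qed.
Lemma cg_mem x y : congr N x y -> N y -> N x.
Proof. by rewrite /congr => h1 h2; have := nsD h2 h1; rewrite addNKl. Qed.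
Lemma mem_cg0 x : N x -> congr N x bzero.
Proof. by rewrite /congr opp0 badd0l. Qed.
Lemma cg0_mem x : congr N x bzero -> N x.
Proof. by rewrite /congr opp0 badd0l. Qed.
End NSG.

Add Parametric Relation (B : brace) (N : nsg B) : (car B) (congr N)
  reflexivity proved by (@cg_refl B N)
  symmetry proved by (@cg_sym B N)
  transitivity proved by (@cg_trans B N) as cg_rel.
Add Parametric Morphism (B : brace) (N : nsg B) : (@badd B)
  with signature (congr N) ==> (congr N) ==> (congr N) as badd_mor.
Proof. move=> ? ? ? ? ?; exact: cg_add. Qed.
Add Parametric Morphism (B : brace) (N : nsg B) : (@bopp B)
  with signature (congr N) ==> (congr N) as bopp_mor.
Proof. move=> ? ? ?; exact: cg_opp. Qed.

Definition of_ideal (B : brace) (I : B -> Prop) (h : is_ideal I) : nsg B :=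
  @NSG B I (proj1 h) (proj1 (proj2 h)) (proj1 (proj2 (proj2 h)))
    (proj1 (proj2 (proj2 (proj2 (proj2 (proj2 h)))))).

Section Ideal.
Variables (B : brace) (I : B -> Prop) (hI : is_ideal I).
Implicit Types a b c x y z : B.

Lemma idl_lam a x : I a -> I (⊖ x ⊕ blambda a x).
Proof.
case: hI => h0 [hD [hN [hM [hV [hJ [hMJ hL]]]]]] Ia.
set a2 := binv x ⊙ a ⊙ binv (binv x).
have Ia2 : I a2 by exact: hMJ.
have e : a ⊙ x = x ⊙ a2.
  by rewrite /a2 invK !bmulA bmulVr bmul1l.
have -> : ⊖ x ⊕ blambda a x = (⊖ x ⊕ ⊖ a ⊕ x) ⊕ blambda x a2.
  by rewrite /blambda e !baddA addKr.
apply: hD; last exact: hL.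
by have := hJ _ (⊖ x) (hN _ Ia); rewrite oppK.
Qed.

Lemma idl_cancel a b : congr I (a ⊙ b) b -> I a.
Proof.
case: hI => h0 [hD [hN [hM [hV [hJ [hMJ hL]]]]]].
rewrite /congr => Ii.
set i := ⊖ b ⊕ a ⊙ b in Ii.
have e1 : a ⊙ b = b ⊕ i by rewrite /i addNKl.
have Ij : I (binv b ⊙ (a ⊙ b)).
  rewrite e1 bbrace bmulVl one0 badd0l; exact: hL.
have := hMJ _ b Ij.
by rewrite bmulA bmulVr bmul1l -bmulA bmulVr bmul1r.
Qed.
End Ideal.
Section FG.
Variables (p : nat) (mul : 'I_p -> 'I_p -> 'I_p) (one : 'I_p) (inv : 'I_p -> 'I_p).
Hypotheses (mA : associative mul) (m1 : left_id one mul) (mV : left_inverse one inv mul).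
Definition Qt : Type := 'I_p.
HB.instance Definition _ := Finite.on Qt.
HB.instance Definition _ := Finite_isGroup.Build Qt mA m1 mV.

Lemma lag_aux (K : pred 'I_p) : one \in K ->
  (forall x y, x \in K -> y \in K -> mul x y \in K) -> #|K| %| p.
Proof.
move=> K1 KM.
have gs : group_set ([set x : Qt | x \in K]).
  apply/group_setP; split; first by rewrite inE.
  by move=> x y; rewrite !inE; apply: KM.
have := cardSg (subsetT (Group gs)).
rewrite /= cardsT card_ord.
suff -> : #|[set x : Qt | x \in K]| = #|K| by [].
by apply: eq_card => x; rewrite inE.
Qed.
End FG.

Definition bP (P : Prop) : bool := if excluded_middle_informative P then true else false.
Lemma bPP (P : Prop) : bP P = true <-> P.
Proof. by rewrite /bP; case: excluded_middle_informative. Qed.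

Section Prime.
Variables (B : brace) (N : nsg B) (J : B -> Prop) (hJ : is_ideal J).
Hypothesis IJ : forall x, N x -> J x.
Variables (q : nat) (f : nat -> B).
Hypotheses (pr : prime q.+2) (fJ : forall i, i < q.+2 -> J (f i))
  (fd : forall i j, i < q.+2 -> j < q.+2 -> congr N (f i) (f j) -> i = j)
  (fc : forall x, J x -> exists2 i, i < q.+2 & congr N x (f i)).
Implicit Types a b c x y z : B.

Lemma idx_ex x : { i : 'I_q.+2 | J x -> congr N x (f i) }.
Proof.
case: (excluded_middle_informative (J x)) => Jx; last by exists ord0.
have : exists i : 'I_q.+2, congr N x (f i).
  by case: (fc Jx) => i lt h; exists (Ordinal lt).
case/constructive_indefinite_description => i h; by exists i.
Qed.
Definition idx x := sval (idx_ex x).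
Lemma idxP x : J x -> congr N x (f (idx x)).
Proof. exact: (svalP (idx_ex x)). Qed.
Lemma fJ' (i : 'I_q.+2) : J (f i).
Proof. exact: fJ. Qed.
Lemma idx_eq x y : J x -> J y -> congr N x y -> idx x = idx y.
Proof.
move=> Jx Jy h; apply: val_inj; apply: fd; try exact: ltn_ord.
apply: (cg_trans (cg_sym (idxP Jx))); apply: (cg_trans h); exact: idxP.
Qed.
Lemma idx_f (i : 'I_q.+2) : idx (f i) = i.
Proof. apply: val_inj; apply: fd; try exact: ltn_ord; apply: cg_sym; exact: idxP (fJ' i). Qed.

Let JD x y : J x -> J y -> J (x ⊕ y). Proof. by case: hJ => _ [h _]; apply: h. Qed.
Let JN x : J x -> J (⊖ x). Proof. by case: hJ => _ [_ [h _]]; apply: h. Qed.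
Let J0 : J bzero. Proof. by case: hJ. Qed.

Definition mulq (i j : 'I_q.+2) := idx (f i ⊕ f j).
Definition oneq := idx bzero.
Definition invq (i : 'I_q.+2) := idx (⊖ f i).

Lemma mulqA : associative mulq.
Proof.
move=> i j k; rewrite /mulq; apply: idx_eq; try (apply: JD; exact: fJ').
have h1 := idxP (JD (fJ' i) (fJ' j)).
have h2 := idxP (JD (fJ' j) (fJ' k)).
rewrite -h1 -h2 baddA; reflexivity.
Qed.
Lemma mul1q : left_id oneq mulq.
Proof.
move=> i; rewrite /mulq /oneq -[RHS]idx_f; apply: idx_eq; try (apply: JD; exact: fJ').
  exact: fJ'.
rewrite -(idxP J0) badd0l; reflexivity.
Qed.
Lemma mulVq : left_inverse oneq invq mulq.
Proof.
move=> i; rewrite /mulq /oneq /invq; apply: idx_eq => //; try (apply: JD; exact: fJ').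
rewrite -(idxP (JN (fJ' i))) baddNl; reflexivity.
Qed.

Lemma sub_all (H : B -> Prop) :
  (forall x, N x -> H x) -> (forall x y, H x -> H y -> H (x ⊕ y)) ->
  (exists h, [/\ J h, H h & ~ N h]) -> forall j, J j -> H j.
Proof.
move=> NH HD [h [Jh Hh nNh]].
have Hc x y : congr N x y -> H y -> H x.
  by move=> c Hy; rewrite -(addNKl y x); apply: HD => //; apply: NH.
pose K := [pred i : 'I_q.+2 | bP (H (f i))].
have Kdiv : #|K| %| q.+2.
  apply: (@lag_aux _ mulq oneq invq mulqA mul1q mulVq).
    rewrite inE /=; apply/bPP; apply: NH; apply: cg0_mem; apply: cg_sym; exact: idxP.
  move=> x y; rewrite !inE /= => /bPP Hx /bPP Hy; apply/bPP.
  apply: (Hc _ (f x ⊕ f y)); last exact: HD.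
  apply: cg_sym; apply: idxP; apply: JD; exact: fJ'.
have K2 : 1 < #|K|.
  apply/card_gt1P; exists oneq, (idx h); split.
  - rewrite inE /=; apply/bPP; apply: NH; apply: cg0_mem; apply: cg_sym; exact: idxP.
  - rewrite inE /=; apply/bPP; apply: (Hc _ h) => //; apply: cg_sym; exact: idxP.
  - apply/eqP => e; apply: nNh; apply: cg0_mem.
    apply: (cg_trans (idxP Jh)); rewrite -e; apply: cg_sym; exact: idxP.
have Kall : #|K| = #|'I_q.+2|.
  rewrite card_ord; case/primeP: pr => _ /(_ _ Kdiv) /orP [/eqP e|/eqP e] //.
  by rewrite e in K2.
move=> j Jj.
have : idx j \in K by move/subset_cardP: Kall => /(_ (subset_predT _)) ->.
rewrite inE /= => /bPP Hf; apply: (Hc _ _ (idxP Jj) Hf).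
Qed.
End Prime.
Fixpoint zr (B : brace) (N : B -> Prop) (k : nat) : B -> Prop :=
  match k with
  | O => N
  | S k' => fun a => forall b, zr N k' (acomm a b)
  end.

Lemma zeta_zr (B : brace) (N : nsg B) k x : zeta_n k x -> zr N k x.
Proof.
elim: k x => [|k IH] x /=; first by move=> ->; exact: ns0.
by move=> h b; apply: IH.
Qed.

Section Factor.
Variables (B : brace) (N : nsg B) (hI : is_ideal N) (J : B -> Prop) (hJ : is_ideal J).
Hypothesis IJ : forall x, N x -> J x.
Variables (q : nat) (f : nat -> B).
Hypotheses (pr : prime q.+2) (fJ : forall i, i < q.+2 -> J (f i))
  (fd : forall i j, i < q.+2 -> j < q.+2 -> congr N (f i) (f j) -> i = j)
  (fc : forall x, J x -> exists2 i, i < q.+2 & congr N x (f i)).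
Variable c : nat.
Hypothesis nil : forall x : B, zeta_n c x.
Implicit Types a b x y z : B.

Let JD x y : J x -> J y -> J (x ⊕ y). Proof. by case: hJ => _ [h _]; apply: h. Qed.
Let JN x : J x -> J (⊖ x). Proof. by case: hJ => _ [_ [h _]]; apply: h. Qed.
Let JJ x b : J x -> J (b ⊕ x ⊕ ⊖ b).
Proof. by case: hJ => _ [_ [_ [_ [_ [h _]]]]]; apply: h. Qed.

Lemma acommJ a b : J a -> J (acomm a b).
Proof.
move=> Ja; have := JD (JN Ja) (JJ (⊖ b) Ja).
by rewrite /acomm oppD oppK !baddA.
Qed.

Lemma acommN a b : N a -> N (acomm a b).
Proof.
move=> Na; have := nsD (nsN Na) (nsJ (⊖ b) Na).
by rewrite /acomm oppD oppK !baddA.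
Qed.

Lemma exists_central : exists a, [/\ J a, ~ N a & forall b, N (acomm a b)].
Proof.
have [a0 [Ja0 nNa0]] : exists a, J a /\ ~ N a.
  apply: NNPP => nh.
  have h i : i < q.+2 -> N (f i).
    move=> lt; apply: NNPP => nN; apply: nh; exists (f i); split => //; exact: fJ.
  have := fd (i:=0) (j:=1) erefl erefl.
  have e : congr N (f 0) (f 1).
    apply: (cg_trans (mem_cg0 (h 0 erefl))); apply: cg_sym; exact: mem_cg0 (h 1 erefl).
  by move/(_ e).
have := zeta_zr N (nil a0).
elim: c a0 Ja0 nNa0 => [|k IH] a Ja nNa /= za; first by [].
case: (classic (forall b, N (acomm a b))) => [hb|]; first by exists a.
case/not_all_ex_not => b nb.
apply: (IH (acomm a b)) => //; exact: acommJ.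
Qed.

Lemma central a b : J a -> N (acomm a b).
Proof.
move=> Ja.
suff : J a /\ forall b, N (acomm a b) by case.
move: a Ja.
apply: (sub_all hJ pr fJ fd fc (H := fun x => J x /\ forall b, N (acomm x b))).
- by move=> x Nx; split; [exact: IJ | move=> b'; exact: acommN].
- move=> x y [Jx hx] [Jy hy]; split; first exact: JD.
  move=> b'; change (congr N (x ⊕ y ⊕ b') (b' ⊕ (x ⊕ y))).
  have hx' : congr N (x ⊕ b') (b' ⊕ x) := hx b'.
  have hy' : congr N (y ⊕ b') (b' ⊕ y) := hy b'.
  rewrite -baddA hy' baddA hx' baddA; reflexivity.
- case: exists_central => a0 [Ja0 nNa0 ha0]; exists a0; split => //.
Qed.

Lemma cen d y : J d -> congr N (d ⊕ y) (y ⊕ d).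
Proof. exact: central. Qed.

Lemma lam_triv a : J a -> forall x, N (⊖ x ⊕ blambda a x).
Proof.
move=> Ja; case: (classic (N a)) => Na; first by move=> x; exact: idl_lam.
pose d y := ⊖ y ⊕ blambda a y.
apply: NNPP => /not_all_ex_not [x0 nx0].
have dJ y : J (d y) by exact: idl_lam.
have dD y z : congr N (d (y ⊕ z)) (d y ⊕ d z).
  rewrite /d lamD oppD.
  have -> : ⊖ z ⊕ ⊖ y ⊕ (blambda a y ⊕ blambda a z) =
     (⊖ z ⊕ (⊖ y ⊕ blambda a y)) ⊕ blambda a z by rewrite !baddA.
  have -> : ⊖ y ⊕ blambda a y ⊕ (⊖ z ⊕ blambda a z) =
     ((⊖ y ⊕ blambda a y) ⊕ ⊖ z) ⊕ blambda a z by rewrite !baddA.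
  apply: cg_add; last reflexivity.
  apply: cg_sym; apply: cen; exact: dJ.
have d0 : d bzero = bzero by rewrite /d lam0 opp0 badd0l.
have : J (⊖ a) /\ exists y, congr N (⊖ a) (d y).
  apply: (sub_all hJ pr fJ fd fc (H := fun j => J j /\ exists y, congr N j (d y))); last exact: JN.
  - move=> x Nx; split; first exact: IJ.
    by exists bzero; rewrite d0; apply: mem_cg0.
  - move=> x y [Jx [y1 h1]] [Jy [y2 h2]]; split; first exact: JD.
    by exists (y1 ⊕ y2); rewrite h1 h2 (dD y1 y2); reflexivity.
  - exists (d x0); split; [exact: dJ | split; [exact: dJ | by exists x0; reflexivity] | exact: nx0].
case=> _ [b hb]; apply: Na.
apply: (idl_cancel hI (b:=b)).
have e : a ⊙ b = a ⊕ (b ⊕ d b) by rewrite mul_lam /d addNKl.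
change (congr N (a ⊙ b) b).
rewrite e -hb.
apply: (cg_trans (cen _ Ja)); rewrite addNKr; reflexivity.
Qed.
End Factor.

Lemma soc_zeta (B : brace) k (x : B) : soc_n k x -> zeta_n k x.
Proof.
elim: k x => [|k IH] x //= h b; apply: IH; exact: (proj2 (h b)).
Qed.

Theorem theorem3p27 (B : brace) :
  supersoluble B ->
  (add_nilpotent B <-> exists n : nat, forall x : B, soc_n n x).
Proof.
case=> n [I [I0 In Iid Iinc Ifac]]; split.
- case=> c nil.
  have key : forall k, k <= n -> forall x, I k x -> soc_n k x.
    elim=> [|k IH] lek x; first by move/I0.
    move=> Ikx /=.
    have ltk : k < n := lek.
    have hsoc : in_soc_mod (I k) x.
      case: (Ifac k ltk) => [[_ h] | [p [prp [g [gJ gd gc]]]]]; first exact: h.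
      pose N := of_ideal (Iid k (ltnW ltk)).
      have hI : is_ideal N := Iid k (ltnW ltk).
      have hJ := Iid k.+1 lek.
      have IJ : forall y, N y -> I k.+1 y := fun y => Iinc k y ltk.
      case: p prp gJ gd gc => [|[|q]] // pr gJ gd gc.
      move=> b; split.
        exact: (lam_triv hI hJ IJ pr gJ gd gc nil Ikx b).
      exact: (central hJ IJ pr gJ gd gc nil b Ikx).
    move=> b; case: (hsoc b) => h1 h2; split; apply: IH => //; exact: ltnW.
  by exists n => x; apply: key (leqnn n) x (In x).
- case=> m hm; exists m => x; apply: soc_zeta; exact: hm.
Qed.
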